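(* Let $q$ be a power of an odd prime $p$ and let $\ell$ be a linearized polynomial over $\mathbb F_{q^2}$. Suppose the function $x^{q+1}+\ell(x^2)$ is planar on $\mathbb F_{q^2}$. Then $\ell$ has at most $q$ roots in $\mathbb F_{q^2}$. Moreover, if $\ell(\mathbb F_{q^2})\cap\mathbb F_q=\{0\}$, then $\ell$ has exactly $q$ roots in $\mathbb F_{q^2}$.
   Context: A linearized polynomial over $\mathbb F_{q^2}$ is a polynomial of the form $\sum_i c_i x^{p^i}$ with $c_i\in\mathbb F_{q^2}$. A function $f$ on $\mathbb F_{q^n}$ is planar if for every $c\in\mathbb F_{q^n}^*$ the map $x\mapsto f(x+c)-f(x)$ is a permutation of $\mathbb F_{q^n}$. $\ell(\mathbb F_{q^2})$ denotes the image of the map induced by $\ell$ on $\mathbb F_{q^2}$. *)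

(* Defs.v *)
From mathcomp Require Import all_boot all_order all_algebra.
Set Implicit Arguments. Unset Strict Implicit. Unset Printing Implicit Defensive.
Import GRing.Theory.
Local Open Scope ring_scope.

Definition linearized (F : fieldType) (p : nat) (c : seq F) (x : F) : F :=
  \sum_(i < size c) c`_i * x ^+ (p ^ i).

Definition planar (F : finFieldType) (f : F -> F) : Prop :=
  forall c : F, c != 0 -> bijective (fun x => f (x + c) - f x).

(* Main.v *)
Require Import Defs.
From mathcomp Require Import all_boot all_order all_algebra.
From mathcomp Require Import finfield.
From mathcomp Require Import ring.
Import GRing.Theory.
Local Open Scope ring_scope.

Lemma frobD (F : fieldType) (p n : nat) (x y : F) : p \in [pchar F] ->
  (x + y) ^+ (p ^ n) = x ^+ (p ^ n) + y ^+ (p ^ n).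
Proof.
move=> hp; apply: exprDn_pchar.
rewrite (eq_pnat _ (pcharf_eq hp)) pnatX pnat_id ?orTb //; exact: pcharf_prime hp.
Qed.

Lemma frobN (F : fieldType) (p n : nat) (x : F) : p \in [pchar F] ->
  (- x) ^+ (p ^ n) = - x ^+ (p ^ n).
Proof.
move=> hp; apply: exprNn_pchar.
rewrite (eq_pnat _ (pcharf_eq hp)) pnatX pnat_id ?orTb //; exact: pcharf_prime hp.
Qed.

Lemma linD (F : fieldType) (p : nat) (c : seq F) (x y : F) : p \in [pchar F] ->
  linearized p c (x + y) = linearized p c x + linearized p c y.
Proof.
move=> hp; rewrite /linearized -big_split; apply: eq_bigr => i _.
by rewrite frobD // mulrDr.
Qed.

Lemma linB (F : fieldType) (p : nat) (c : seq F) (x y : F) : p \in [pchar F] ->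
  linearized p c (x - y) = linearized p c x - linearized p c y.
Proof.
move=> hp; apply/eqP; rewrite eq_sym subr_eq -linD //; by rewrite subrK.
Qed.

Lemma roots_bound (F : finFieldType) (n : nat) (a : F) : (1 < n)%N ->
  (#|[set y : F | (y ^+ n == a * y)%R]| <= n)%N.
Proof.
move=> n1.
pose P : {poly F} := 'X^n - a *: 'X.
have szP : size P = n.+1.
  rewrite /P size_polyDl ?size_polyXn // size_polyN.
  by apply: leq_ltn_trans (size_scale_leq _ _) _; rewrite size_polyX.
have P0 : P != 0 by rewrite -size_poly_eq0 szP.
have := max_poly_roots P0 _ (enum_uniq (mem [set y : F | (y ^+ n == a * y)%R])).
rewrite -cardE szP ltnS; apply.
apply/allP => y; rewrite mem_enum inE => /eqP hy.
by rewrite rootE /P !hornerE hy subrr.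
Qed.

Lemma fiber_bound (F : finFieldType) (g : F -> F) :
  (forall x y, g (x - y) = g x - g y) ->
  (#|F| <= #|[set x | g x == 0%R]| * #|[set g x | x in [set: F]]|)%N.
Proof.
move=> gB.
pose s y := odflt 0 [pick z | g z == y].
have hs x : g (s (g x)) = g x.
  rewrite /s; case: pickP => [z /eqP //|/(_ x)]; by rewrite eqxx.
pose h x := (x - s (g x), g x).
have hinj : injective h.
  move=> x y [e1 e2]; rewrite e2 in e1.
  by move/(canRL (subrK _)): e1 => ->; rewrite subrK.
rewrite -cardsX -cardsT -(card_imset _ hinj); apply: subset_leq_card.
apply/subsetP => _ /imsetP [x _ ->]; rewrite !inE /= gB hs subrr eqxx /=.
by apply: imset_f; rewrite inE.
Qed.

Theorem proposition2p3 (F : finFieldType) (p k : nat) (c : seq F) :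
  prime p -> odd p -> (0 < k)%N -> p \in [pchar F] ->
  #|F| = ((p ^ k) ^ 2)%N ->
  planar (fun x : F => x ^+ (p ^ k).+1 + linearized p c (x ^+ 2)) ->
  (#|[set x : F | linearized p c x == 0%R]| <= p ^ k)%N /\
  ((forall x : F, (linearized p c x) ^+ (p ^ k) = linearized p c x ->
                  linearized p c x = 0) ->
   #|[set x : F | linearized p c x == 0%R]| = (p ^ k)%N).
Proof.
move=> pp _ k0 hp hF hpl.
set q := (p ^ k)%N.
set L := linearized p c.
have q1 : (1 < q)%N.
  rewrite /q; have := prime_gt1 pp; move: k0 pp; clear.
  case: k => // k _ pp; rewrite expnS => h2.
  have := expn_gt0 p k; rewrite (prime_gt0 pp) /= => h1.
  by apply: leq_trans h2 _; rewrite leq_pmulr.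
have xqq (x : F) : x ^+ q ^+ q = x.
  by rewrite -exprM mulnn -hF expf_card.
have LD x y : L (x + y) = L x + L y by exact: linD.
have LB x y : L (x - y) = L x - L y by exact: linB.
set K := [set x : F | L x == 0%R].
have part1 : (#|K| <= q)%N.
  have [D Dinj _] := hpl 1 (oner_neq0 F).
  have Dinj' : injective (fun x : F =>
      (x + 1) ^+ q.+1 + L ((x + 1) ^+ 2) - (x ^+ q.+1 + L (x ^+ 2))).
    exact: can_inj Dinj.
  have DE x : (x + 1) ^+ q.+1 + L ((x + 1) ^+ 2) - (x ^+ q.+1 + L (x ^+ 2))
      = (x ^+ q + x) + L x *+ 2 + (1 + L 1).
    have e1 : (x + 1) ^+ 2 = x ^+ 2 + (x + x) + 1 by ring.
    rewrite exprSr frobD // expr1n e1 !LD mulr2n -/q (exprSr x q); ring.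
  pose t x : F := x ^+ q + x.
  have tinj : {in K &, injective t}.
    move=> x y; rewrite !inE => /eqP Lx /eqP Ly e; apply: Dinj'.
    by rewrite /= !DE Lx Ly -/(t x) -/(t y) e.
  rewrite -(card_in_imset tinj).
  have := @roots_bound F q (1) q1; apply: leq_trans; apply: subset_leq_card.
  apply/subsetP => _ /imsetP [x _ ->]; rewrite inE /t mul1r frobD // xqq addrC //.
split=> // H.
apply/eqP; rewrite eqn_leq part1 /=.
set I := [set L x | x in [set: F]].
have hI : (#|I| <= q)%N.
  pose u y : F := y ^+ q - y.
  have uinj : {in I &, injective u}.
    move=> _ _ /imsetP [x1 _ ->] /imsetP [x2 _ ->] e.
    apply/eqP; rewrite -subr_eq0 -LB; apply/eqP/H.
    rewrite LB frobD // frobN //; apply/eqP; rewrite -subr_eq0; apply/eqP.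
    rewrite -/q; move: (L x1) (L x2) e => a b; rewrite /u.
    move: (a ^+ q) (b ^+ q) => aq bq e.
    have -> : aq - bq - (a - b) = (aq - a) - (bq - b) by ring.
    by rewrite e subrr.
  rewrite -(card_in_imset uinj).
  have := @roots_bound F q ((-1)) q1; apply: leq_trans; apply: subset_leq_card.
  apply/subsetP => _ /imsetP [y _ ->]; rewrite inE /u frobD // frobN // xqq.
  by rewrite mulN1r opprB.
have := @fiber_bound F L LB; rewrite -/K -/I hF expnS expn1 => h.
have := leq_trans h (leq_mul (leqnn #|K|) hI).
by rewrite leq_pmul2r // ltnW.
Qed.
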